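(* Let $\Sigma$ be a finite alphabet with $N=|\Sigma|\ge2$, let $\delta$ be a Hamming compatible metric on $\Sigma^*$, and let $u\in\Sigma_n$, $w\in\Sigma_m$ with $n\ge m$ and $\delta(u,w)<d_2(u,w)$. Let $h=H(\underline{u},\underline{w})$. Then exactly $(N-1)^{n-h}$ Hamming opposites $v$ of $u$ satisfy $H(\underline{u},\underline{w})+H(\underline{v},\underline{w})=m$, and every such $v$ satisfies $\delta(v,w)\ge d_2(v,w)$. In particular, when $N=2$, the unique Hamming opposite $v$ of $u$ satisfies $\delta(v,w)\ge d_2(v,w)$.
   Context: $\Sigma_n$ is the set of words of length $n$ over $\Sigma$, $\Sigma^*$ the set of all finite words, $l(u)$ the length of $u$, $H$ the Hamming distance between equal-length words. For arbitrary $x,y$, if $l(x)\ge l(y)$, $\underline{x}$ is the prefix of $x$ of length $l(y)$ and $\underline{y}=y$ (symmetrically otherwise). Metrics are integer-valued; a metric $\delta$ on $\Sigma^*$ is Hamming compatible if $\delta(x,y)=H(x,y)$ whenever $l(x)=l(y)$. $d_2(x,y)=H(\underline{x},\underline{y})+\lceil |l(x)-l(y)|/2\rceil$. Two words of the same length $n$ are Hamming opposites if their Hamming distance is $n$. *)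

(* Defs.v *)
From mathcomp Require Import all_boot.
Set Implicit Arguments. Unset Strict Implicit. Unset Printing Implicit Defensive.

Section Words.
Variable Sigma : finType.

(* Hamming distance; only used on words of equal length. *)
Definition hamming (x y : seq Sigma) : nat :=
  count (fun p : Sigma * Sigma => p.1 != p.2) (zip x y).

(* [under x y] is the underlined x relative to y: the prefix of x of length
   l(y) if l(x) >= l(y), and x itself otherwise (take does both). *)
Definition under (x y : seq Sigma) : seq Sigma := take (size y) x.

(* d_2(x,y) = H(x_, y_) + ceil(|l(x)-l(y)|/2) ; ceil(k/2) = uphalf k *)
Definition d2 (x y : seq Sigma) : nat :=
  hamming (under x y) (under y x)
  + uphalf ((size x - size y) + (size y - size x)).

(* integer-valued (hence nat-valued, metrics being nonnegative) metric *)
Definition is_metric (delta : seq Sigma -> seq Sigma -> nat) : Prop :=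
  (forall x y, delta x y = 0 <-> x = y) /\
  (forall x y, delta x y = delta y x) /\
  (forall x y z, delta x z <= delta x y + delta y z).

Definition hamming_compatible (delta : seq Sigma -> seq Sigma -> nat) : Prop :=
  forall x y, size x = size y -> delta x y = hamming x y.

End Words.

(* Main.v *)
Require Import Defs.
From mathcomp Require Import all_boot.
From mathcomp Require Import zify.
Set Implicit Arguments.

Section H.
Variable Sigma : finType.
Variable x0 : Sigma.

Lemma hamming_sum (x y : seq Sigma) : size x = size y ->
  hamming x y = \sum_(i < size x) (nth x0 x i != nth x0 y i).
Proof.
elim: x y => [|a x IH] [|b y] //= Hs.
  by rewrite big_ord0.
case: Hs => Hs; rewrite /hamming /= -/(hamming x y) big_ord_recl /= IH //.
Qed.

Lemma sum_all (k : nat) (P : 'I_k -> bool) :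
  (\sum_(i < k) P i == k) = [forall i, P i].
Proof.
have E : \sum_(i < k) P i + \sum_(i < k) ~~ P i = k.
  rewrite -big_split /= -[X in _ = X]card_ord -sum1_card.
  by apply: eq_bigr => i _; case: (P i).
apply/eqP/forallP => [H i|H].
  have : \sum_(i < k) ~~ P i == 0 by apply/eqP; lia.
  rewrite sum_nat_eq0 => /forallP/(_ i)/implyP/(_ isT).
  by case: (P i).
rewrite -[RHS]E; have -> : \sum_(i < k) ~~ P i = 0.
  by apply: big1 => i _; rewrite H.
by rewrite addn0.
Qed.

Lemma sum_ge1 (k : nat) (f : 'I_k -> nat) : (forall i, 1 <= f i) ->
  (\sum_(i < k) f i == k) = [forall i, f i == 1].
Proof.
move=> H.
have E : \sum_(i < k) f i = \sum_(i < k) (f i - 1) + k.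
  rewrite -[X in _ + X]card_ord -sum1_card -big_split /=.
  by apply: eq_bigr => i _; have := H i; lia.
rewrite E -[X in _ == X]add0n eqn_add2r sum_nat_eq0.
apply/forallP/forallP => K i; have := K i; have := H i; rewrite /=; lia.
Qed.

Fixpoint goodk (A : nat -> pred Sigma) (k : nat) (s : seq Sigma) : bool :=
  if s is x :: s' then (x \in A k) && goodk A k.+1 s' else true.

Lemma goodkP A k s : goodk A k s <-> forall i, i < size s -> nth x0 s i \in A (k + i).
Proof.
elim: s k => [|x s IH] k /=; first by split.
split.
  move=> /andP [H1 /IH H2] [|i] Hi /=; first by rewrite addn0.
  by rewrite addnS -addSn; apply: H2.
move=> H; apply/andP; split; first by have := H 0 isT; rewrite addn0.
by apply/IH => i Hi; rewrite addSn -addnS; apply: (H i.+1).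
Qed.

Lemma card_good A : forall n k,
  #|[set v : n.-tuple Sigma | goodk A k v]| = \prod_(i < n) #|A (k + i)|.
Proof.
elim=> [|n IH] k.
  rewrite big_ord0.
  have -> : [set v : 0.-tuple Sigma | goodk A k v] = setT.
    by apply/setP => v; rewrite !inE tuple0.
  by rewrite cardsT card_tuple.
have -> : [set v : n.+1.-tuple Sigma | goodk A k v] =
  (fun p : Sigma * n.-tuple Sigma => [tuple of p.1 :: p.2]) @:
     setX [set x | x \in A k] [set t : n.-tuple Sigma | goodk A k.+1 t].
  apply/setP => v; case/tupleP: v => x t.
  rewrite inE /=; apply/idP/imsetP.
    move=> /andP [H1 H2]; exists (x, t) => //.
    by rewrite !inE H1 H2.
  case=> [[y s]]; rewrite !inE /= => /andP [H1 H2] [-> ->].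
  by rewrite H1.
rewrite card_imset; last first.
  by move=> [a s] [b t] /= [-> /val_inj ->].
rewrite cardsX big_ord_recl addn0 IH cardsE; congr (_ * _).
by apply: eq_bigr => i _; rewrite addSn addnS.
Qed.

Lemma prod_if (k K : nat) (P : nat -> bool) :
  \prod_(i < k) (if P i then 1 else K) = K ^ (\sum_(i < k) ~~ P i).
Proof.
elim: k => [|k IH]; first by rewrite !big_ord0.
rewrite !big_ord_recr /= IH expnD; case: (P k) => /=; by rewrite ?muln1 ?expn1.
Qed.

Lemma sum_compl (k : nat) (P : 'I_k -> bool) :
  \sum_(i < k) P i + \sum_(i < k) ~~ P i = k.
Proof.
rewrite -big_split /= -[X in _ = X]card_ord -sum1_card.
by apply: eq_bigr => i _; case: (P i).
Qed.

Lemma term1 (a b c : Sigma) : a != c ->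
  ((a != b) + (c != b) == 1) = (a == b) || (c == b).
Proof.
move=> H; case: (a =P b) => [Eab|Nab]; case: (c =P b) => [Ecb|Ncb] //=.
by rewrite Eab Ecb eqxx in H.
Qed.

Lemma termge1 (a b c : Sigma) : a != c -> 1 <= (a != b) + (c != b).
Proof.
move=> H; case: (a =P b) => [Eab|Nab]; case: (c =P b) => [Ecb|Ncb] //=.
by rewrite Eab Ecb eqxx in H.
Qed.

End H.

Theorem mainTheorem10 (Sigma : finType) (delta : seq Sigma -> seq Sigma -> nat)
  (n m : nat) (u w : seq Sigma) :
  2 <= #|Sigma| ->
  is_metric delta -> hamming_compatible delta ->
  size u = n -> size w = m -> m <= n ->
  delta u w < d2 u w ->
  let h := hamming (under u w) (under w u) in
  #|[set v : n.-tuple Sigma | (hamming u v == n)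
       && (hamming (under u w) (under w u) + hamming (under v w) (under w v) == m)]|
    = (#|Sigma| - 1) ^ (n - h)
  /\ (forall v : seq Sigma, size v = n -> hamming u v = n ->
        hamming (under u w) (under w u) + hamming (under v w) (under w v) = m ->
        d2 v w <= delta v w)
  /\ (#|Sigma| = 2 -> forall v : seq Sigma, size v = n -> hamming u v = n ->
        d2 v w <= delta v w).
Proof.
move=> H2 [M0 [Msym Mtri]] Hc Hu Hw Hmn Hlt h.
have [x0 _] : exists x : Sigma, true.
  by case/card_gt0P: (ltnW H2) => x _; exists x.
have Uwu : under w u = w by rewrite /under take_oversize // Hw Hu.
have Uuw : under u w = take m u by rewrite /under Hw.
have Uvw : forall v : seq Sigma, under v w = take m v by move=> v; rewrite /under Hw.
have Uwv : forall v : seq Sigma, size v = n -> under w v = w.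
  by move=> v Hv; rewrite /under take_oversize // Hw Hv.
have HT : forall v : seq Sigma, size v = n ->
   hamming (take m v) w = \sum_(i < m) (nth x0 v i != nth x0 w i).
  move=> v Hv; rewrite (@hamming_sum _ x0); last by rewrite size_takel ?Hv.
  rewrite size_takel ?Hv //; apply: eq_bigr => i _; by rewrite nth_take.
have HU : forall v : seq Sigma, size v = n ->
   hamming u v = \sum_(i < n) (nth x0 u i != nth x0 v i).
  by move=> v Hv; rewrite (@hamming_sum _ x0) ?Hu ?Hv.
rewrite /h Uuw Uwu.
pose A (i : nat) : pred Sigma := [pred x | (x != nth x0 u i) &&
   ((i < m) ==> (nth x0 u i == nth x0 w i) || (x == nth x0 w i))].
have KEY : forall v : seq Sigma, size v = n ->
  (hamming u v == n) && (hamming (take m u) w + hamming (take m v) w == m)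
  <-> (forall i, i < n -> nth x0 v i \in A i).
  move=> v Hv; rewrite HU // HT // HT // -big_split /= sum_all.
  split.
    move=> /andP [/forallP H1 H3] i Hi.
    have Hac := H1 (Ordinal Hi); rewrite /= in Hac.
    rewrite inE eq_sym Hac /=; apply/implyP => Him.
    rewrite sum_ge1 in H3; last by move=> j; apply: termge1; exact: (H1 (widen_ord Hmn j)).
    by move/forallP: H3 => /(_ (Ordinal Him)) /=; rewrite term1.
  move=> H; have H1 : forall i, i < n -> nth x0 u i != nth x0 v i.
    by move=> i Hi; move: (H i Hi); rewrite inE eq_sym => /andP [].
  apply/andP; split; first by apply/forallP => i; apply: H1.
  rewrite sum_ge1; last by move=> j; apply: termge1; apply: H1; exact: (leq_trans (ltn_ord j) Hmn).
  apply/forallP => j; rewrite term1; last by apply: H1; exact: (leq_trans (ltn_ord j) Hmn).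
  move: (H j (leq_trans (ltn_ord j) Hmn)); rewrite inE ltn_ord /= => /andP [_ ->].
  done.
split.
  have -> : [set v : n.-tuple Sigma | (hamming u v == n) &&
     (hamming (take m u) w + hamming (under v w) (under w v) == m)]
     = [set v : n.-tuple Sigma | goodk _ A 0 v].
    apply/setP => v; rewrite !inE Uvw Uwv ?size_tuple //.
    apply/idP/idP.
      by move/(KEY v (size_tuple v)) => H; apply/goodkP => i Hi; apply: H; rewrite -(size_tuple v).
    by move/goodkP => H; apply/(KEY v (size_tuple v)) => i Hi; apply: H; rewrite size_tuple.
  rewrite card_good.
  rewrite (eq_bigr (fun i : 'I_n => if (i < m) && (nth x0 u i != nth x0 w i) then 1 else #|Sigma|.-1)); last first.
    move=> i _; rewrite add0n.
    case E: ((i < m) && (nth x0 u i != nth x0 w i)).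
      move/andP: E => [Him Hab]; rewrite -(card1 (nth x0 w i)); apply: eq_card => x.
      rewrite !inE Him /=.
      case: (eqVneq x (nth x0 w i)) => [->|Hx]; first by rewrite orbT andbT eq_sym.
      by rewrite orbF (negbTE Hab) andbF.
    rewrite -(cardC1 (nth x0 u i)); apply: eq_card => x; rewrite !inE.
    case: (i < m) E => /= E; by rewrite ?andbT // (negbFE E) andbT.
  have PI := prod_if n #|Sigma|.-1 (fun i => (i < m) && (nth x0 u i != nth x0 w i)); rewrite /= in PI; rewrite PI subn1; congr (_ ^ _).
  have SC : \sum_(i < n) ((i < m) && (nth x0 u i != nth x0 w i)) + \sum_(i < n) ~~((i < m) && (nth x0 u i != nth x0 w i)) = n by apply: sum_compl.
  rewrite HT // -[X in _ = _ - X]/(\sum_(i < m) (nth x0 u i != nth x0 w i)).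
  rewrite (big_ord_widen n (fun i => (nth x0 u i != nth x0 w i) : nat) Hmn).
  have -> : \sum_(i < n | i < m) ((nth x0 u i != nth x0 w i) : nat)
          = \sum_(i < n) ((i < m) && (nth x0 u i != nth x0 w i)).
    by rewrite big_mkcond; apply: eq_bigr => i _; case: (i < m).
  move: SC. set S1 := \sum_(i < n) ((i < m) && _). set S2 := \sum_(i < n) ~~ _. clearbody S1 S2; lia.
have P2 : forall v : seq Sigma, size v = n -> hamming u v = n ->
        hamming (take m u) w + hamming (under v w) (under w v) = m ->
        d2 v w <= delta v w.
  move=> v Hv Huv Hsum.
  have Ht := Mtri u w v; rewrite (Msym w v) Hc ?Hu ?Hv // Huv in Ht.
  move: Hlt Hsum; rewrite /d2 !Uvw (Uwv v Hv) ?Uwu Hu Hv Hw.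
  have := uphalfK (n - m + (m - n)); case: odd => /=; lia.
split; first exact: P2.
move=> HN v Hv Huv; apply: P2 => //.
rewrite Uvw (Uwv v Hv) HT // HT // -big_split /=.
have HA : forall i, i < n -> nth x0 u i != nth x0 v i.
  move: Huv; rewrite HU // => /eqP; rewrite sum_all => /forallP H i Hi.
  exact: (H (Ordinal Hi)).
rewrite -[RHS]card_ord -sum1_card; apply: eq_bigr => i _.
have Hac := HA i (leq_trans (ltn_ord i) Hmn).
apply/eqP; rewrite term1 //.
case: (eqVneq (nth x0 u i) (nth x0 w i)) => //= Hab.
have C1 : #|predC1 (nth x0 u i)| <= 1 by rewrite cardC1 HN.
move/card_le1_eqP: C1 => C1.
apply/eqP; apply: C1; rewrite !inE eq_sym //.
Qed.
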